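(* Let $X$ be a commutative topological free algebra over $\mathbb{K}$ with a set of free generators $A$. Let $B,C$ be a partition of $A$ and suppose $\alpha=|C|$ is infinite with $\alpha\ge w(X)$. Let $Y=\langle B\rangle$. Then $X\setminus Y$ is strongly $\alpha$-dense-algebrable, i.e., there is a set of free generators $F\subset X$ with $|F|=\alpha$ such that $\langle F\rangle$ is dense in $X$ and $\langle F\rangle\subset (X\setminus Y)\cup\{0\}$.
   Context: Algebras are associative linear algebras over $\mathbb{K}$ ($\mathbb{R}$ or $\mathbb{C}$); a topological algebra is an algebra with a topology making sum, product and scalar multiplication continuous. $w(X)$ is the smallest cardinality of a base of the topology. $\langle S\rangle$ is the subalgebra generated by $S$. With $\mathbb{P}_n$ the polynomials in $n$ variables without constant term, a subset $S$ of a commutative algebra is a set of free generators (SFG) if $P(x_1,\dots,x_n)\ne0$ for every $n$, every non-zero $P\in\mathbb{P}_n$ and all pairwise distinct $x_1,\dots,x_n\in S$. $X$ is a commutative (topological) free algebra with SFG $A$ if $A$ is an SFG and $X=\langle A\rangle$. A subset $M$ of a commutative topological algebra is strongly $\alpha$-dense-algebrable if $M\cup\{0\}$ contains a dense subalgebra of the form $\langle F\rangle$ with $F$ an SFG of cardinality $\alpha$ (a dense $\alpha$-generated free subalgebra). *)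

(* Defs.v *)
From HB Require Import structures.
From mathcomp Require Import all_boot all_order all_algebra.
From mathcomp Require Import all_classical all_reals all_analysis.
From mathcomp Require Import complex.
From mathcomp Require mpoly.
Export (canonicals, coercions) mpoly.

Set Implicit Arguments.
Unset Strict Implicit.
Unset Printing Implicit Defensive.

Import Order.TTheory GRing.Theory Num.Theory.
Import numFieldNormedType.Exports.
Local Open Scope classical_set_scope.
Local Open Scope ring_scope.

Definition Kfield (R : realType) (b : bool) : numFieldType :=
  if b then (R : numFieldType) else (complex R : numFieldType).

HB.mixin Record Lmodule_isNUComAlg (K : numFieldType) V of GRing.Lmodule K V := {
  nmul : V -> V -> V;
  nmulA : associative nmul;
  nmulC : commutative nmul;
  nmulDl : left_distributive nmul +%R;
  nmulZl : forall (a : K) (u v : V), nmul (a *: u) v = a *: nmul u v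
}.

#[short(type="nuComAlgType")]
HB.structure Definition NUComAlg (K : numFieldType) :=
  {V of Lmodule_isNUComAlg K V & GRing.Lmodule K V}.

#[short(type="topNUComAlgType")]
HB.structure Definition TopNUComAlg (K : numFieldType) :=
  {V of NUComAlg K V & Topological V}.

Definition topological_algebra (K : numFieldType) (X : topNUComAlgType K) :=
  [/\ continuous (fun p : X * X => p.1 + p.2),
      continuous (fun p : X * X => nmul p.1 p.2)
    & continuous (fun p : K * X => p.1 *: p.2)].

Definition is_subalgebra (K : numFieldType) (X : nuComAlgType K) (Y : set X) :=
  [/\ Y 0,
      (forall u v, Y u -> Y v -> Y (u + v)),
      (forall (a : K) u, Y u -> Y (a *: u))
    & (forall u v, Y u -> Y v -> Y (nmul u v))].

Definition gen_subalg (K : numFieldType) (X : nuComAlgType K) (S : set X) : set X :=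
  \bigcap_(Y in [set Y | is_subalgebra Y /\ S `<=` Y]) Y.

(* Non-unital product of a nonempty list of factors (0 for the empty list). *)
Definition nprod (K : numFieldType) (X : nuComAlgType K) (s : seq X) : X :=
  if s is a :: l then foldl nmul a l else 0.

(* Evaluation of a monomial x^m = prod_i x_i^(m i) (m <> 0). *)
Definition mono_eval (K : numFieldType) (X : nuComAlgType K) (n : nat)
    (m : mpoly.multinom n) (x : 'I_n -> X) : X :=
  nprod (flatten [seq nseq (mpoly.fun_of_multinom m i) (x i) | i <- enum 'I_n]).

(* Evaluation P(x_1, ..., x_n) of a polynomial without constant term. *)
Definition peval (K : numFieldType) (X : nuComAlgType K) (n : nat)
    (P : mpoly.mpoly n K) (x : 'I_n -> X) : X :=
  \sum_(m <- mpoly.msupp P) mpoly.mcoeff m P *: mono_eval m x.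

Definition no_const (K : numFieldType) (n : nat) (P : mpoly.mpoly n K) :=
  mpoly.mcoeff (@mpoly.mnm0 n) P = 0.

Definition SFG (K : numFieldType) (X : nuComAlgType K) (S : set X) :=
  forall (n : nat) (P : mpoly.mpoly n K), no_const P -> P <> 0 ->
  forall x : 'I_n -> X, injective x -> (forall i, S (x i)) -> peval P x <> 0.

Definition free_with_SFG (K : numFieldType) (X : nuComAlgType K) (A : set X) :=
  SFG A /\ gen_subalg A = setT.

Definition is_base (T : topologicalType) (B : set_system T) :=
  (forall U, B U -> open U) /\
  (forall U, open U -> exists2 D, D `<=` B & U = \bigcup_(V in D) V).

(* w(X) <= |C| : some base of X has cardinality at most |C|. *)
Definition weight_le (T : topologicalType) (U : Type) (C : set U) :=
  exists2 B : set_system T, is_base B & (B #<= C)%card.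

Definition strongly_dense_algebrable (K : numFieldType) (X : topNUComAlgType K)
    (U : Type) (C : set U) (M : set X) :=
  exists F : set X, [/\ SFG F, (F #= C)%card, dense (gen_subalg F)
                      & gen_subalg F `<=` M `|` [set 0]].

(* Main.v *)
From HB Require Import structures.
From mathcomp Require Import all_boot all_order all_algebra.
From mathcomp Require Import mpoly.
From mathcomp Require Import zify.
From mathcomp Require Import all_classical all_reals all_analysis.
Require Import Defs.
Import numFieldNormedType.Exports.
Set Implicit Arguments.
Unset Strict Implicit.
Unset Printing Implicit Defensive.
Import Order.TTheory GRing.Theory Num.Theory.
Local Open Scope classical_set_scope.
Local Open Scope ring_scope.

Section Approx.
Variables (K : idomainType) (n : nat).
Implicit Types (p q : {mpoly K[n]}).

Lemma msize_le p d : (forall m, m \in msupp p -> (mdeg m < d)%N) -> (msize p <= d)%N.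
Proof. by move=> H; rewrite msizeE; apply/bigmax_leqP_seq => m /H. Qed.

Lemma msizeM_le p q : (msize (p * q) <= (msize p + msize q).-1)%N.
Proof.
have [->|p0] := eqVneq p 0; first by rewrite mul0r msize0.
have [->|q0] := eqVneq q 0; first by rewrite mulr0 msize0.
by rewrite msizeM.
Qed.

Lemma msizeZ_le c p : (msize (c *: p) <= msize p)%N.
Proof. exact: mmeasureZ_le. Qed.

Lemma msizeD_le' p q d : (msize p <= d)%N -> (msize q <= d)%N -> (msize (p + q) <= d)%N.
Proof.
by move=> hp hq; apply: leq_trans (msizeD_le _ _) _; rewrite geq_max hp hq.
Qed.

Definition approx p (c : K) (M : 'X_{1..n}) := (msize (p - c *: 'X_[M]) <= mdeg M)%N.

Lemma approx_msize p c M : approx p c M -> (msize p <= (mdeg M).+1)%N.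
Proof.
move=> h; rewrite -(subrK (c *: 'X_[M]) p); apply: msizeD_le'.
  exact: leq_trans h _.
by apply: leq_trans (msizeZ_le _ _) _; rewrite msizeX.
Qed.

Lemma approxM p q c d M M' : approx p c M -> approx q d M' ->
  approx (p * q) (c * d) (M + M')%MM.
Proof.
move=> hp hq; rewrite /approx mdegD.
have -> : p * q - (c * d) *: 'X_[M + M'] =
   (p - c *: 'X_[M]) * q + (c *: 'X_[M]) * (q - d *: 'X_[M']).
  by rewrite mulrBl mulrBr addrA subrK -scalerAl -scalerAr scalerA -mpolyXD.
apply: msizeD_le'.
  apply: leq_trans (msizeM_le _ _) _.
  have := leq_add hp (approx_msize hq); lia.
apply: leq_trans (msizeM_le _ _) _.
have h1 : (msize (c *: 'X_[M]) <= (mdeg M).+1)%N.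
  by apply: leq_trans (msizeZ_le _ _) _; rewrite msizeX.
have := leq_add h1 hq; lia.
Qed.

Lemma approx1 : approx 1 1 0%MM.
Proof. by rewrite /approx mpolyX0 scale1r subrr msize0. Qed.

Lemma approxX p c M e : approx p c M -> approx (p ^+ e) (c ^+ e) (M *+ e)%MM.
Proof.
move=> h; elim: e => [|e IH]; first by rewrite !expr0 mulm0n approx1.
by rewrite !exprS mulmS; apply: approxM.
Qed.

Lemma approx_prod k (F : 'I_k -> {mpoly K[n]}) (c : 'I_k -> K) (M : 'I_k -> 'X_{1..n}) :
  (forall j, approx (F j) (c j) (M j)) ->
  approx (\prod_j F j) (\prod_j c j) (\sum_j M j)%MM.
Proof.
move=> h; elim/big_rec3: _ => [|j y1 y2 y3 _ hy]; first exact: approx1.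
exact: approxM.
Qed.

Lemma approx_coef p c M M' : approx p c M -> (mdeg M <= mdeg M')%N ->
  p@_M' = c * (M == M')%:R.
Proof.
move=> h le; rewrite -(subrK (c *: 'X_[M]) p) mcoeffD mcoeffZ mcoeffX.
rewrite memN_msupp_eq0 ?add0r //; apply: msize_mdeg_ge.
exact: leq_trans h le.
Qed.

Lemma approxS (R : {mpoly K[n]}) (t : K) (j : 'I_n) (N : nat) :
  (msize R <= N)%N -> approx (R + t *: 'X_j ^+ N) t (U_(j) *+ N)%MM.
Proof.
by move=> h; rewrite /approx mpolyXn addrK mdegMn mdeg1 mul1n.
Qed.

End Approx.

Lemma seq_argmax (T : eqType) (s : seq T) (W : T -> nat) x0 :
  x0 \in s -> exists2 x, x \in s & forall y, y \in s -> (W y <= W x)%N.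
Proof.
elim: s x0 => [//|a s IH] x0 _.
case: s IH => [|b s] IH.
  by exists a; rewrite ?mem_seq1 // => y; rewrite mem_seq1 => /eqP ->.
have [x xs Hx] := IH b (mem_head _ _).
case: (leqP (W a) (W x)) => h.
  exists x; first by rewrite in_cons xs orbT.
  by move=> y; rewrite in_cons => /orP[/eqP ->|/Hx].
exists a; first exact: mem_head.
move=> y; rewrite in_cons => /orP[/eqP ->//|/Hx hy].
exact: leq_trans hy (ltnW h).
Qed.

Section Core.
Variables (K : idomainType) (k n : nat).
Variables (tau : 'I_k -> 'I_n) (N : 'I_k -> nat) (t : 'I_k -> K)
  (Rs : 'I_k -> {mpoly K[n]}).
Hypotheses (tau_inj : injective tau) (N_gt0 : forall j, (0 < N j)%N)
  (t_neq0 : forall j, t j != 0) (Rs_size : forall j, (msize (Rs j) <= N j)%N).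

Definition Slist : k.-tuple {mpoly K[n]} :=
  [tuple Rs j + t j *: 'X_(tau j) ^+ N j | j < k].

Definition Mon (m : 'X_{1..k}) : 'X_{1..n} :=
  (\sum_(j < k) (U_(tau j) *+ N j) *+ m j)%MM.

Lemma MonE m j0 : Mon m (tau j0) = (N j0 * m j0)%N.
Proof.
rewrite /Mon mnm_sumE (bigD1 j0) //= big1 ?addn0.
  by rewrite !mulmnE mnm1E eqxx mul1n mulnC.
move=> j /negbTE hj; rewrite !mulmnE mnm1E.
by rewrite (inj_eq tau_inj) hj.
Qed.

Lemma mdeg_Mon m : mdeg (Mon m) = (\sum_(j < k) N j * m j)%N.
Proof.
rewrite /Mon mdeg_sum; apply: eq_bigr => j _.
by rewrite !mdegMn mdeg1 mul1n.
Qed.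

Lemma Mon_inj : injective Mon.
Proof.
move=> m1 m2 h; apply/mnmP => j.
have := MonE m1 j; rewrite h MonE => /eqP.
by rewrite eqn_mul2l (negbTE (lt0n_neq0 (N_gt0 j))) /= => /eqP.
Qed.

Lemma approx_mono (m : 'X_{1..k}) :
  approx ('X_[m] \mPo Slist) (\prod_(j < k) t j ^+ m j) (Mon m).
Proof.
rewrite comp_mpolyX /Mon; apply: approx_prod => j.
rewrite tnth_mktuple; apply: approxX; exact: approxS.
Qed.

Lemma core (P : {mpoly K[k]}) : P != 0 -> P@_0%MM = 0 ->
  exists M : 'X_{1..n}, (exists j, M (tau j) != 0%N) /\ (P \mPo Slist)@_M != 0.
Proof.
move=> P0 P00.
have [m0 m0s] : exists m0, m0 \in msupp P.
  by case E: (msupp P) => [|a l]; [move/eqP: E; rewrite msupp_eq0 (negbTE P0)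
    | exists a; rewrite mem_head].
have [ms mss Hms] := seq_argmax (fun m => mdeg (Mon m)) m0s.
exists (Mon ms); split.
  have : ms != 0%MM.
    by apply: contraTneq mss => ->; rewrite mcoeff_msupp P00 eqxx.
  move=> nz; have [j hj] : exists j, ms j != 0%N.
    apply/existsP; apply: contraR nz => /existsPn H; apply/eqP/mnmP => i.
    by rewrite mnm0E; apply/eqP; move: (H i); rewrite negbK.
  by exists j; rewrite MonE muln_eq0 negb_or hj (lt0n_neq0 (N_gt0 j)).
rewrite comp_mpolyEX raddf_sum /=.
rewrite (bigD1_seq ms) ?msupp_uniq //= big1_seq ?addr0.
  rewrite mcoeffZ (approx_coef (approx_mono ms)) // eqxx mulr1.
  rewrite mulf_neq0 // -?mcoeff_msupp //.
  by apply/prodf_neq0 => j _; rewrite expf_neq0.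
move=> m /andP[nm ms']; rewrite mcoeffZ (approx_coef (approx_mono m)) ?Hms //.
by rewrite (inj_eq Mon_inj) (negbTE nm) !mulr0.
Qed.

End Core.

Section Rename.
Variables (K : idomainType) (n n' : nat) (sigma : 'I_n -> 'I_n').

Definition ren (P : {mpoly K[n]}) : {mpoly K[n']} :=
  P \mPo [tuple 'X_(sigma i) | i < n].

Definition rmon (m : 'X_{1..n}) : 'X_{1..n'} := (\sum_(i < n) U_(sigma i) *+ m i)%MM.

Lemma ren_sum P : ren P = \sum_(m <- msupp P) P@_m *: 'X_[rmon m].
Proof.
rewrite /ren comp_mpolyEX; apply: eq_bigr => m _; congr (_ *: _).
rewrite comp_mpolyX /rmon -mprodXnE; apply: eq_bigr => i _.
by rewrite tnth_mktuple.
Qed.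

Lemma msupp_ren P M : M \in msupp (ren P) -> exists2 m, m \in msupp P & M = rmon m.
Proof.
rewrite ren_sum => /msupp_sum_le /flattenP [s /mapP [m]].
rewrite mem_filter /= => ms -> /msuppZ_le; rewrite msuppX mem_seq1 => /eqP ->.
by exists m.
Qed.

Lemma mdeg_rmon m : mdeg (rmon m) = mdeg m.
Proof.
rewrite /rmon mdeg_sum mdegE; apply: eq_bigr => i _.
by rewrite mdegMn mdeg1 mul1n.
Qed.

Lemma rmon_out m j : (forall i, sigma i != j) -> rmon m j = 0%N.
Proof.
move=> h; rewrite /rmon mnm_sumE big1 // => i _.
by rewrite mulmnE mnm1E (negbTE (h i)).
Qed.

Lemma msize_ren P : (msize (ren P) <= msize P)%N.
Proof.
apply: msize_le => M /msupp_ren [m ms ->]; rewrite mdeg_rmon.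
exact: msize_mdeg_lt.
Qed.

Lemma ren_coef_out P (M : 'X_{1..n'}) j : (forall i, sigma i != j) -> M j != 0%N -> (ren P)@_M = 0.
Proof.
move=> h hM; apply: memN_msupp_eq0; apply/negP => /msupp_ren [m _ eM].
by move: hM; rewrite eM rmon_out ?eqxx.
Qed.

End Rename.

Section Unitz.
Variables (K : numFieldType) (X : nuComAlgType K).

Definition unitz := (K * X)%type.
HB.instance Definition _ := GRing.Zmodule.on unitz.

Definition umul (p q : unitz) : unitz :=
  (p.1 * q.1, p.1 *: q.2 + q.1 *: p.2 + nmul p.2 q.2).
Definition uone : unitz := (1, 0).

Lemma nmulZr (a : K) (u v : X) : nmul u (a *: v) = a *: nmul u v.
Proof. by rewrite nmulC nmulZl nmulC. Qed.
Lemma nmulDr : right_distributive (@nmul K X) +%R.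
Proof. by move=> u v w; rewrite nmulC nmulDl !(nmulC u). Qed.
Lemma nmul0l (u : X) : nmul 0 u = 0.
Proof. by rewrite -(scale0r 0) nmulZl !scale0r. Qed.
Lemma nmul0r (u : X) : nmul u 0 = 0.
Proof. by rewrite nmulC nmul0l. Qed.

Lemma umulA : associative umul.
Proof.
move=> [a u] [b v] [c w]; rewrite /umul /=; congr (_, _); first by rewrite mulrA.
rewrite !scalerDr !nmulDl !nmulDr !nmulZl !nmulZr !scalerA nmulA.
rewrite (mulrC c a) (mulrC c b) -!addrA; congr (_ + _); congr (_ + _).
rewrite addrCA; congr (_ + _); rewrite [RHS]addrCA; congr (_ + _).
by rewrite addrCA.
Qed.

Lemma umulC : commutative umul.
Proof.
move=> [a u] [b v]; rewrite /umul /=; congr (_, _); first by rewrite mulrC.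
by rewrite nmulC (addrC (a *: v)).
Qed.

Lemma umul1 : left_id uone umul.
Proof. by move=> [a u]; rewrite /umul /= mul1r scale1r scaler0 nmul0l !addr0. Qed.

Lemma umulDl : left_distributive umul +%R.
Proof.
move=> [a u] [b v] [c w]; rewrite /umul /=; congr (_, _); first by rewrite mulrDl.
rewrite scalerDl scalerDr nmulDl.
rewrite -!addrA; congr (_ + _); rewrite addrCA; congr (_ + _).
rewrite !addrA; congr (_ + _); rewrite addrC -!addrA; congr (_ + _); by rewrite addrC.
Qed.

Lemma uone_neq0 : uone != 0.
Proof. by apply/eqP => -[] /eqP; rewrite oner_eq0. Qed.

HB.instance Definition _ := GRing.Zmodule_isComNzRing.Build unitz
  umulA umulC umul1 umulDl uone_neq0.

Lemma umulE (p q : unitz) : p * q = umul p q. Proof. by []. Qed.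
Lemma uoneE : (1 : unitz) = (1, 0). Proof. by []. Qed.

Definition uinj (a : K) : unitz := (a, 0).
Lemma uinj_is_mult : monoid_morphism uinj.
Proof.
split => // a b; rewrite umulE /umul /uinj /=.
by rewrite !scaler0 nmul0l !addr0.
Qed.

Lemma uinj_is_zmod : zmod_morphism uinj.
Proof. by move=> a c; rewrite /uinj; congr (_, _); rewrite subr0. Qed.
HB.instance Definition _ := GRing.isZmodMorphism.Build K unitz uinj uinj_is_zmod.
HB.instance Definition _ := GRing.isMonoidMorphism.Build K unitz uinj uinj_is_mult.

Definition uvar (y : X) : unitz := (0, y).

Lemma uprod_aux (a : X) (l : seq X) :
  uvar a * \prod_(y <- l) uvar y = uvar (foldl nmul a l).
Proof.
elim: l a => [|c l IH] a /=; first by rewrite big_nil mulr1.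
rewrite big_cons mulrA -IH; congr (_ * _).
by rewrite umulE /umul /uvar /= mulr0 !scale0r !add0r.
Qed.

Lemma uprod (s : seq X) :
  \prod_(y <- s) uvar y = ((size s == 0%N)%:R, nprod s).
Proof.
case: s => [|a l]; first by rewrite big_nil.
by rewrite big_cons uprod_aux.
Qed.

Lemma snd_sum (I : Type) (r : seq I) (P : pred I) (F : I -> unitz) :
  (\sum_(i <- r | P i) F i).2 = \sum_(i <- r | P i) (F i).2.
Proof. exact: (big_morph (fun p : unitz => p.2) (id1 := 0) (op1 := +%R)). Qed.
Lemma fst_sum (I : Type) (r : seq I) (P : pred I) (F : I -> unitz) :
  (\sum_(i <- r | P i) F i).1 = \sum_(i <- r | P i) (F i).1.
Proof. exact: (big_morph (fun p : unitz => p.1) (id1 := 0) (op1 := +%R)). Qed.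

Lemma uexp_nseq (k : nat) (a : X) : uvar a ^+ k = \prod_(y <- nseq k a) uvar y.
Proof. by elim: k => [|k IH]; rewrite ?big_nil ?expr0 // exprS IH /= big_cons. Qed.

Lemma mmap1_u n (x : 'I_n -> X) (m : 'X_{1..n}) :
  mmap1 (fun i => uvar (x i)) m =
  (\prod_(y <- flatten [seq nseq (m i) (x i) | i <- enum 'I_n]) uvar y).
Proof.
rewrite big_flatten big_map big_enum /mmap1; apply: eq_bigr => i _.
exact: uexp_nseq.
Qed.

Lemma mono_evalE n (m : 'X_{1..n}) (x : 'I_n -> X) :
  mono_eval m x = (mmap1 (fun i => uvar (x i)) m).2.
Proof. by rewrite mmap1_u uprod. Qed.

Definition umap n (x : 'I_n -> X) (P : {mpoly K[n]}) : unitz :=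
  mmap uinj (fun i => uvar (x i)) P.

Lemma pevalE n (P : {mpoly K[n]}) (x : 'I_n -> X) :
  peval P x = (umap x P).2.
Proof.
rewrite /peval /umap /mmap snd_sum; apply: eq_bigr => m _.
rewrite umulE /umul /uinj /= scaler0 nmul0l !addr0; congr (_ *: _).
exact: mono_evalE.
Qed.

Lemma fst_prod (I : Type) (r : seq I) (P : pred I) (F : I -> unitz) :
  (\prod_(i <- r | P i) F i).1 = \prod_(i <- r | P i) (F i).1.
Proof. exact: (big_morph (fun p : unitz => p.1) (id1 := 1) (op1 := *%R)). Qed.

Lemma fst_uexp (a : unitz) k : (a ^+ k).1 = a.1 ^+ k.
Proof. by elim: k => [|k IH]; rewrite ?expr0 // !exprS -IH. Qed.

Lemma mmap1_fst n (x : 'I_n -> X) (m : 'X_{1..n}) :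
  (mmap1 (fun i => uvar (x i)) m).1 = (m == 0%MM)%:R.
Proof.
rewrite /mmap1 fst_prod; under eq_bigr do rewrite fst_uexp /=.
case: eqP => [->|/eqP nz].
  by rewrite big1 // => i _; rewrite mnm0E expr0.
have [i mi] : exists i, m i != 0%N.
  apply/existsP; apply: contraR nz => /existsPn H; apply/eqP/mnmP => i.
  by rewrite mnm0E; apply/eqP; move: (H i); rewrite negbK.
by rewrite (bigD1 i) //= expr0n (negbTE mi) mul0r.
Qed.

Lemma umap_fst n (x : 'I_n -> X) (P : {mpoly K[n]}) : (umap x P).1 = P@_0%MM.
Proof.
rewrite /umap /mmap fst_sum.
under eq_bigr do rewrite umulE /umul /uinj /= mmap1_fst.
have [H0|H0] := boolP (0%MM \in msupp P).
  rewrite (bigD1_seq 0%MM) ?msupp_uniq //= eqxx mulr1 big1 ?addr0 //.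
  by move=> m /negbTE ->; rewrite mulr0.
rewrite big1_seq ?(memN_msupp_eq0 H0) // => m /andP[_ Hm].
by case: eqP Hm H0 => [->->//|_ _ _]; rewrite mulr0.
Qed.

Lemma umapE n (x : 'I_n -> X) (P : {mpoly K[n]}) :
  umap x P = (P@_0%MM, peval P x).
Proof. by rewrite pevalE -(umap_fst x); case: (umap x P). Qed.

Section Peval.
Variables (n : nat) (x : 'I_n -> X).

Lemma pevalD (P Q : {mpoly K[n]}) : peval (P + Q) x = peval P x + peval Q x.
Proof. by rewrite !pevalE /umap rmorphD. Qed.
Lemma pevalN (P : {mpoly K[n]}) : peval (- P) x = - peval P x.
Proof. by rewrite !pevalE /umap rmorphN. Qed.
Lemma pevalB (P Q : {mpoly K[n]}) : peval (P - Q) x = peval P x - peval Q x.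
Proof. by rewrite pevalD pevalN. Qed.
Lemma peval0 : peval (0 : {mpoly K[n]}) x = 0.
Proof. by rewrite !pevalE /umap rmorph0. Qed.
Lemma pevalZ c (P : {mpoly K[n]}) : peval (c *: P) x = c *: peval P x.
Proof.
rewrite !pevalE /umap mmapZ umulE /umul /uinj /=.
by rewrite scaler0 nmul0l !addr0.
Qed.
Lemma pevalC c : peval (c%:MP : {mpoly K[n]}) x = 0.
Proof. by rewrite !pevalE /umap mmapC. Qed.
Lemma pevalXU i : peval ('X_i : {mpoly K[n]}) x = x i.
Proof. by rewrite !pevalE /umap mmapX mmap1U. Qed.
Lemma pevalXn i k : peval ('X_i ^+ k : {mpoly K[n]}) x = nprod (nseq k (x i)).
Proof.
rewrite !pevalE /umap.
have -> : mmap uinj (fun i => uvar (x i)) ('X_i ^+ k) =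
  (mmap uinj (fun i => uvar (x i)) 'X_i) ^+ k by exact: rmorphXn.
by rewrite mmapX mmap1U /= uexp_nseq uprod.
Qed.
Lemma pevalM (P Q : {mpoly K[n]}) : P@_0%MM = 0 -> Q@_0%MM = 0 ->
  peval (P * Q) x = nmul (peval P x) (peval Q x).
Proof.
move=> P0 Q0; rewrite !pevalE /umap rmorphM umulE /umul /=.
by rewrite -!/(umap x _) !umap_fst P0 Q0 !scale0r !add0r.
Qed.
Lemma peval_sub0 (P : {mpoly K[n]}) : peval (P - (P@_0%MM)%:MP) x = peval P x.
Proof. by rewrite pevalB pevalC subr0. Qed.
End Peval.

Lemma umap_comp n k (x : 'I_k -> X) (P : {mpoly K[n]}) (lq : n.-tuple {mpoly K[k]}) :
  (forall i, (tnth lq i)@_0%MM = 0) ->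
  umap x (P \mPo lq) = umap (fun i => peval (tnth lq i) x) P.
Proof.
move=> lq0; rewrite comp_mpolyEX /umap raddf_sum [in RHS]/mmap /=.
apply: eq_bigr => m _.
rewrite comp_mpolyX mmapZ rmorph_prod /mmap1; congr (_ * _).
apply: eq_bigr => i _; rewrite rmorphXn; congr (_ ^+ _).
by have := umapE x (tnth lq i); rewrite lq0 /umap /uvar => <-.
Qed.

Lemma peval_comp n k (x : 'I_k -> X) (P : {mpoly K[n]}) (lq : n.-tuple {mpoly K[k]}) :
  (forall i, (tnth lq i)@_0%MM = 0) ->
  peval (P \mPo lq) x = peval P (fun i => peval (tnth lq i) x).
Proof. by move=> lq0; rewrite !pevalE umap_comp. Qed.

Lemma peval_ren n n' (sigma : 'I_n -> 'I_n') (P : {mpoly K[n]}) (z : 'I_n' -> X) :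
  peval (ren sigma P) z = peval P (fun i => z (sigma i)).
Proof.
rewrite /ren peval_comp => [|i]; last first.
  by rewrite tnth_mktuple mcoeffX mnm1_eq0.
by congr (peval P _); apply: funext => i; rewrite tnth_mktuple pevalXU.
Qed.

Definition Rep (S : set X) (y : X) := exists n (a : 'I_n -> X) (P : {mpoly K[n]}),
  [/\ injective a, (forall i, S (a i)) & y = peval P a].

Lemma merge_seq (S : set X) (L : seq X) : (forall y, y \in L -> S y) ->
  exists n (z : 'I_n -> X), [/\ injective z, (forall i, S (z i)) &
     forall y, y \in L -> exists i, z i = y].
Proof.
move=> LS; set s := undup L; exists (size s), (fun i => nth 0 s i); split.
- move=> i j /eqP; rewrite nth_uniq ?undup_uniq // => /eqP h.
  exact: val_inj.
- by move=> i; apply: LS; rewrite -mem_undup; apply: mem_nth.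
- move=> y yL; have ys : y \in s by rewrite mem_undup.
  have hi : (index y s < size s)%N by rewrite index_mem.
  by exists (Ordinal hi) => /=; rewrite nth_index.
Qed.

Lemma embed n m (a : 'I_n -> X) (z : 'I_m -> X) :
  (forall i, exists j, z j = a i) -> exists sigma : 'I_n -> 'I_m, forall i, z (sigma i) = a i.
Proof. by move=> h; have [f hf] := choice h; exists f. Qed.

Lemma peval_eq n (P : {mpoly K[n]}) (x y : 'I_n -> X) : x =1 y -> peval P x = peval P y.
Proof. by move=> h; congr (peval P _); apply: funext. Qed.

Lemma Rep_merge2 (S : set X) y1 y2 : Rep S y1 -> Rep S y2 ->
  exists n (z : 'I_n -> X) (P1 P2 : {mpoly K[n]}),
  [/\ injective z, (forall i, S (z i)), y1 = peval P1 z & y2 = peval P2 z].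
Proof.
move=> [n1 [a1 [Q1 [i1 S1 ->]]]] [n2 [a2 [Q2 [i2 S2 ->]]]].
set L := [seq a1 i | i <- enum 'I_n1] ++ [seq a2 i | i <- enum 'I_n2].
have LS : forall y, y \in L -> S y.
  by move=> y; rewrite mem_cat => /orP[] /mapP [i _ ->].
have [n [z [iz Sz hz]]] := merge_seq LS.
have [s1 hs1] : exists s1 : 'I_n1 -> 'I_n, forall i, z (s1 i) = a1 i.
  by apply: embed => i; apply: hz; rewrite mem_cat; apply/orP; left; apply: map_f; rewrite mem_enum.
have [s2 hs2] : exists s2 : 'I_n2 -> 'I_n, forall i, z (s2 i) = a2 i.
  by apply: embed => i; apply: hz; rewrite mem_cat; apply/orP; right; apply: map_f; rewrite mem_enum.
exists n, z, (ren s1 Q1), (ren s2 Q2); split => //.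
  by rewrite peval_ren; apply: peval_eq => i; rewrite hs1.
by rewrite peval_ren; apply: peval_eq => i; rewrite hs2.
Qed.

Definition cut0 n (P : {mpoly K[n]}) := P - (P@_0%MM)%:MP.
Lemma cut0_0 n (P : {mpoly K[n]}) : (cut0 P)@_0%MM = 0.
Proof. by rewrite /cut0 mcoeffB mcoeffC eqxx mulr1 subrr. Qed.
Lemma peval_cut0 n (P : {mpoly K[n]}) (x : 'I_n -> X) : peval (cut0 P) x = peval P x.
Proof. exact: peval_sub0. Qed.

Lemma Rep_subalg (S : set X) : is_subalgebra (Rep S).
Proof.
split.
- exists 0%N, (fun i => 0), 0; split => //; first by move=> [].
  by move=> [].
  by rewrite peval0.
- move=> u v ru rv; have [n [z [P1 [P2 [iz Sz -> ->]]]]] := Rep_merge2 ru rv.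
  by exists n, z, (P1 + P2); split => //; rewrite pevalD.
- move=> c u [n [z [P [iz Sz ->]]]].
  by exists n, z, (c *: P); split => //; rewrite pevalZ.
- move=> u v ru rv; have [n [z [P1 [P2 [iz Sz -> ->]]]]] := Rep_merge2 ru rv.
  exists n, z, (cut0 P1 * cut0 P2); split => //.
  by rewrite pevalM ?cut0_0 // !peval_cut0.
Qed.

Lemma Rep_S (S : set X) y : S y -> Rep S y.
Proof.
move=> Sy; exists 1%N, (fun _ => y), 'X_ord0; split => //.
  by move=> i j _; rewrite !ord1.
by rewrite pevalXU.
Qed.

Lemma gen_Rep (S : set X) : gen_subalg S `<=` Rep S.
Proof. by move=> y; apply; split; [exact: Rep_subalg | move=> z; exact: Rep_S]. Qed.

Lemma gen_sub (S : set X) : S `<=` gen_subalg S.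
Proof. by move=> y Sy Y [_]; apply. Qed.

Lemma merge_ix (S : set X) (L : seq X) y0 : y0 \in L -> (forall y, y \in L -> S y) ->
  exists n (z : 'I_n -> X) (ix : X -> 'I_n), [/\ injective z, (forall i, S (z i)) &
     forall y, y \in L -> z (ix y) = y].
Proof.
move=> y0L LS; set s := undup L.
have s0 : (0 < size s)%N.
  by rewrite lt0n size_eq0; apply/eqP => E; move: (y0L); rewrite -mem_undup -/s E.
exists (size s), (fun i => nth 0 s i), (fun y => insubd (Ordinal s0) (index y s)); split.
- move=> i j /eqP; rewrite nth_uniq ?undup_uniq // => /eqP h.
  exact: val_inj.
- by move=> i; apply: LS; rewrite -mem_undup; apply: mem_nth.
- move=> y yL; have ys : y \in s by rewrite mem_undup.
  by rewrite val_insubd index_mem ys nth_index.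
Qed.

Lemma ren_no_const n n' (sigma : 'I_n -> 'I_n') (P : {mpoly K[n]}) :
  P@_0%MM = 0 -> (ren sigma P)@_0%MM = 0.
Proof.
move=> P0; apply: memN_msupp_eq0; apply/negP => /msupp_ren [m ms e].
have := mdeg_rmon sigma m; rewrite -e mdeg0 => /esym/eqP; rewrite mdeg_eq0 => /eqP m0.
by move: ms; rewrite m0 mcoeff_msupp P0 eqxx.
Qed.

Lemma msize_cut0 n (P : {mpoly K[n]}) : (msize (cut0 P) <= (msize P).+1)%N.
Proof.
rewrite /cut0; apply: msizeD_le'; first exact: leqnSn.
by rewrite msizeN msizeC; case: (_ != 0).
Qed.

Lemma mcoeff_cut0 n (P : {mpoly K[n]}) M : M != 0%MM -> (cut0 P)@_M = P@_M.
Proof. by move=> hM; rewrite /cut0 mcoeffB mcoeffC (negbTE hM) mulr0 subr0. Qed.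

Lemma XnU0 n (j : 'I_n) N : (0 < N)%N -> ('X_j ^+ N : {mpoly K[n]})@_0%MM = 0.
Proof.
move=> N0; rewrite mpolyXn mcoeffX; case: eqP => // /(congr1 mdeg).
by rewrite mdegMn mdeg1 mul1n mdeg0 => E; move: N0; rewrite E.
Qed.

Section Main.
Variables (A B C : set X).
Hypotheses (sfgA : SFG A) (BA : B `<=` A) (CA : C `<=` A) (BC : B `&` C = set0).

Definition DT := {n : nat & (('I_n -> X) * {mpoly K[n]})%type}.
Variables (rep : X -> DT) (t : X -> K).
Hypotheses (t_neq0 : forall c, C c -> t c != 0)
  (repA : forall c i, A ((projT2 (rep c)).1 i)).

Local Notation nr c := (projT1 (rep c)).
Local Notation ar c := (projT2 (rep c)).1.
Local Notation Rr c := (projT2 (rep c)).2.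
Definition Nn c := (msize (Rr c)).+1.
Definition fdata c := peval (Rr c) (ar c) + t c *: nprod (nseq (Nn c) c).

Lemma main k (P : {mpoly K[k]}) (c : 'I_k -> X) : injective c -> (forall j, C (c j)) ->
  P != 0 -> P@_0%MM = 0 -> forall q, gen_subalg B q ->
  peval P (fun j => fdata (c j)) != q.
Proof.
move=> ic Cc P0 P00 q /gen_Rep [nb [b [Q0 [_ Bb ->]]]].
have [j0 _] : exists j0 : 'I_k, True.
  case: k P c ic Cc P0 P00 => [|k'] P c _ _ P0 P00; last by exists ord0.
  by move: P0; rewrite (nvar0_mpolyC P) P00 mpolyC0 eqxx.
set L := flatten [seq [seq ar (c j) i | i <- enum 'I_(nr (c j))] | j <- enum 'I_k]
  ++ [seq c j | j <- enum 'I_k] ++ [seq b i | i <- enum 'I_nb].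
have memA j i : ar (c j) i \in L.
  rewrite mem_cat; apply/orP; left; apply/flattenP.
  by exists [seq ar (c j) i | i <- enum 'I_(nr (c j))]; apply: map_f; rewrite mem_enum.
have memC j : c j \in L.
  by rewrite !mem_cat; apply/or3P; apply: Or32; apply: map_f; rewrite mem_enum.
have memB i : b i \in L.
  by rewrite !mem_cat; apply/or3P; apply: Or33; apply: map_f; rewrite mem_enum.
have LA : forall y, y \in L -> A y.
  move=> y; rewrite !mem_cat => /or3P[/flattenP [s /mapP [j _ ->] /mapP [i _ ->]]
    | /mapP [j _ ->] | /mapP [i _ ->]]; [exact: repA | exact: CA | exact: BA].
have [n [z [ix [iz Az hz]]]] := merge_ix (memC j0) LA.
pose tau := fun j => ix (c j).
have ztau j : z (tau j) = c j by rewrite /tau hz.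
have itau : injective tau.
  by move=> j1 j2 /(congr1 z); rewrite !ztau; exact: ic.
pose Rs := fun j => ren (fun i => ix (ar (c j) i)) (cut0 (Rr (c j))).
have RsN j : (msize (Rs j) <= Nn (c j))%N.
  exact: leq_trans (msize_ren _ _) (msize_cut0 _).
have Rs0 j : (Rs j)@_0%MM = 0 by apply: ren_no_const; apply: cut0_0.
have NP j : (0 < Nn (c j))%N by [].
have tP j : t (c j) != 0 by apply: t_neq0.
have [M [[j Mj] DM]] := core itau NP tP RsN P0 P00.
set Sl := Slist _ _ _ _ in DM.
have fS j' : fdata (c j') = peval (tnth Sl j') z.
  rewrite tnth_mktuple pevalD pevalZ pevalXn ztau peval_ren peval_cut0 /fdata.
  by congr (_ + _); apply: peval_eq => i; rewrite hz.
have Sl0 j' : (tnth Sl j')@_0%MM = 0.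
  by rewrite tnth_mktuple mcoeffD mcoeffZ XnU0 // mulr0 addr0 Rs0.
pose Q := ren (fun i => ix (b i)) Q0.
have eQ : peval Q0 b = peval Q z.
  by rewrite peval_ren; apply: peval_eq => i; rewrite hz.
have QM : Q@_M = 0.
  apply: ren_coef_out _ Mj => i; apply/eqP => e.
  have : (B `&` C) (b i).
    by split; [exact: Bb | rewrite -(hz _ (memB i)) e ztau; exact: Cc].
  by rewrite BC.
apply/eqP => E.
have M0 : M != 0%MM by apply: contra Mj => /eqP ->; rewrite mnm0E.
pose D := P \mPo Sl - Q.
have : peval (cut0 D) z <> 0.
  apply: sfgA => //; first exact: cut0_0.
  move/(congr1 (mcoeff M)); rewrite mcoeff_cut0 // mcoeffB QM subr0 mcoeff0.
  by apply/eqP.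
rewrite peval_cut0 /D pevalB -eQ -E peval_comp //.
by rewrite (peval_eq _ fS) subrr.
Qed.

End Main.
End Unitz.

Lemma card_le_fun (T U : Type) (A : set T) (B : set U) (u0 : U) : (A #<= B)%card ->
  exists g : T -> U, (forall a, A a -> B (g a)) /\ (forall a1 a2, A a1 -> A a2 -> g a1 = g a2 -> a1 = a2).
Proof.
move/card_leP => [f].
exists (fun a => match pselect (A a) with
  | left h => val (f (SigSub (mem_set h))) | right _ => u0 end); split.
  by move=> a Aa; case: pselect => // h; apply: set_valP.
move=> a1 a2 A1 A2; case: pselect => // h1; case: pselect => // h2.
move/val_inj => e; have := @inj _ _ _ f _ _ (in_setT _) (in_setT _) e.
by move=> [].
Qed.

Lemma small_t (K : numFieldType) (X : topNUComAlgType K) (U : set X) (p y : X) :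
  topological_algebra X -> open U -> U p -> exists s : K, s != 0 /\ U (p + s *: y).
Proof.
move=> [cadd _ cscale] oU Up.
have h1 : (fun s : K => s *: y) @ (nbhs (0 : K)) --> (0 : K) *: y.
  apply: (cvg_comp2 (h := fun (a : K) (v : X) => a *: v) cvg_id (cvg_cst y)).
  exact: (cscale (0, y)).
have h2 : (fun s : K => p + s *: y) @ (nbhs (0 : K)) --> p + (0 : K) *: y.
  apply: (cvg_comp2 (h := fun (a b : X) => a + b) (cvg_cst p) h1).
  exact: (cadd (p, 0 *: y)).
rewrite scale0r addr0 in h2.
have : nbhs p U by apply: open_nbhs_nbhs.
move/h2 => /nbhs_ballP [e /= e0 he].
exists (e / 2); split; first by rewrite mulf_neq0 ?invr_eq0 ?pnatr_eq0 // gt_eqF.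
apply: he; rewrite /ball /= sub0r normrN.
rewrite ger0_norm ?divr_ge0 ?ler0n ?ltW // ltr_pdivrMr ?ltr0n // ltr_pMr // ltr1n.
by [].
Qed.

Lemma gen0 (K : numFieldType) (X : nuComAlgType K) (S : set X) : gen_subalg S 0.
Proof. by move=> Y [[]]. Qed.

Theorem theorem4p3 (R : realType) (b : bool) (X : topNUComAlgType (Kfield R b))
    (A B C : set X) :
  topological_algebra X ->
  free_with_SFG A ->
  A = B `|` C -> B `&` C = set0 ->
  infinite_set C ->
  weight_le X C ->
  strongly_dense_algebrable C (~` gen_subalg B).
Proof.
move=> talg [sfgA genA] AE BC _ [Bs [bopen bcover] le].
have BA : B `<=` A by rewrite AE => x Bx; left.
have CA : C `<=` A by rewrite AE => x Cx; right.
have [g [gC ginj]] := card_le_fun 0 le.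
have data : forall c : X, exists rs : DT X * Kfield R b,
   rs.2 != 0 /\ (forall i, A ((projT2 rs.1).1 i)) /\
   (forall U, Bs U -> U !=set0 -> g U = c ->
     U (peval (projT2 rs.1).2 (projT2 rs.1).1 +
        rs.2 *: nprod (nseq (msize (projT2 rs.1).2).+1 c))).
  move=> c.
  case: (pselect (exists U, [/\ Bs U, U !=set0 & g U = c])) => [[U [BU [p Up] gU]]|nU].
  - have : Rep A p by apply: gen_Rep; rewrite genA.
    move=> [n [a [R0 [_ Aa ep]]]].
    have [s [s0 Us]] := small_t (nprod (nseq (msize R0).+1 c)) talg (bopen _ BU) Up.
    exists (existT _ n (a, R0), s); split => //; split => // V BV V0 gV.
    have -> : V = U by apply: ginj => //; rewrite gV gU.
    by rewrite /= -ep.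
  - exists (existT _ 0%N ((fun _ => 0), 0), 1); split; first exact: oner_neq0.
    split; first by case.
    by move=> V BV V0 gV; exfalso; apply: nU; exists V.
have [rs hrs] := choice data.
pose rep c := (rs c).1; pose t c := (rs c).2.
have t_neq0 : forall c, C c -> t c != 0 by move=> c _; exact: (hrs c).1.
have repA : forall c i, A ((projT2 (rep c)).1 i) by move=> c; exact: (hrs c).2.1.
pose f := fdata rep t.
have mainF := main sfgA BA CA BC t_neq0 repA.
have pick : forall n (x : 'I_n -> X), injective x -> (forall i, (f @` C) (x i)) ->
    exists cc : 'I_n -> X, [/\ injective cc, forall i, C (cc i) & forall i, f (cc i) = x i].
  move=> n x ix Fx.
  have : forall i, exists c, C c /\ f c = x i by move=> i; have [c Cc e] := Fx i; exists c.
  move=> /choice [cc hcc]; exists cc; split.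
  - by move=> i j e; apply: ix; rewrite -(hcc i).2 -(hcc j).2 e.
  - by move=> i; exact: (hcc i).1.
  - by move=> i; exact: (hcc i).2.
exists (f @` C); split.
- move=> n P nc P0 x ix Fx.
  have [cc [icc Ccc fcc]] := pick n x ix Fx.
  have P0' : P != 0 by apply/eqP.
  have := @mainF n P cc icc Ccc P0' nc 0 (@gen0 _ _ B).
  by rewrite (peval_eq _ fcc) => H E; rewrite E eqxx in H.
- apply: inj_card_eq => c1 c2 /set_mem C1 /set_mem C2 e.
  case: (eqVneq c1 c2) => // ne.
  pose cc : 'I_2 -> X := fun j => if j == ord0 then c1 else c2.
  have icc : injective cc.
    move=> i j; rewrite /cc; case: i => -[|[|i']] hi; case: j => -[|[|j']] hj //= e';
      by [apply: val_inj | move: ne; rewrite e' eqxx].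
  have Ccc : forall j, C (cc j) by move=> j; rewrite /cc; case: eqP.
  pose P : {mpoly (Kfield R b)[2]} := 'X_ord0 - 'X_ord_max.
  have P0 : P != 0.
    apply/eqP => /(congr1 (mcoeff U_(ord0)%MM)); rewrite mcoeffB !mcoeffX eqxx eq_mnm1 /=.
    by rewrite subr0 mcoeff0 => /eqP; rewrite oner_eq0.
  have P00 : P@_0%MM = 0.
    by rewrite mcoeffB !mcoeffX !mnm1_eq0 subrr.
  have := @mainF 2 P cc icc Ccc P0 P00 0 (@gen0 _ _ B).
  by rewrite pevalB !pevalXU /cc /= -/f e subrr eqxx.
- move=> O [z Oz] oO.
  have [D DB OD] := bcover O oO; rewrite OD in Oz *.
  case: Oz => V DV Vz; have BV := DB V DV.
  exists (f (g V)); split; first exists V => //.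
    by apply: (hrs (g V)).2.2 => //; exists z.
  by apply: gen_sub; exists (g V) => //; exact: gC.
- move=> y /gen_Rep [n [x [P [ix Fx ->]]]].
  case: (eqVneq (peval P x) 0) => [->|y0]; [by right | left].
  move=> Bq; have [cc [icc Ccc fcc]] := pick n x ix Fx.
  have cP : cut0 P != 0.
    by apply: contra y0 => /eqP c0; rewrite -peval_cut0 c0 peval0.
  have := @mainF n (cut0 P) cc icc Ccc cP (cut0_0 _) _ Bq.
  by rewrite (peval_eq _ fcc) peval_cut0 eqxx.
Qed.
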